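(* There exist absolute constants $c>0$ and $C>0$ such that the following holds. Let $n\ge2$ be an integer and $L,B,\varepsilon>0$ with $\varepsilon\le LB^2/4$. Then for every PIFO algorithm $\mathcal{A}$ there exist a dimension $d\le C\big(1+B\sqrt{L/(n\varepsilon)}\big)$ and $n$ functions $f_1,\dots,f_n:\mathbb{R}^d\to\mathbb{R}$, each $L$-smooth and convex, such that $f=\frac1n\sum_i f_i$ has a minimizer $x^*$ with $\|x_0-x^*\|_2\le B$ ($x_0$ the initial point of $\mathcal{A}$), and the iterates of $\mathcal{A}$ run on $f_1,\dots,f_n$ satisfy $\mathbb{E} f(x_t)-f(x^* )\ge\varepsilon$ for all integers $0\le t\le c\big(n+B\sqrt{nL/\varepsilon}\big)$. That is, $\mathcal{A}$ needs $\Omega(n+B\sqrt{nL/\varepsilon})$ oracle queries to find $\hat x$ with $\mathbb{E} f(\hat x)-f(x^* )<\varepsilon$.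
   Context: A differentiable $g:\mathbb{R}^d\to\mathbb{R}$ is $L$-smooth if $\|\nabla g(x)-\nabla g(y)\|_2\le L\|x-y\|_2$ for all $x,y$. For $\gamma>0$, $\mathrm{prox}^{\gamma}_g(x)=\arg\min_u\{g(u)+\frac{1}{2\gamma}\|x-u\|_2^2\}$. PIFO algorithm: given $f_1,\dots,f_n:\mathbb{R}^d\to\mathbb{R}$ and $f=\frac1n\sum_i f_i$, a PIFO algorithm $\mathcal{A}$ is specified by a probability vector $(p_1,\dots,p_n)$ ($p_j\ge0$, $\sum_j p_j=1$), an initial point $x_0$ and parameters $\gamma_t>0$; it draws indices $i_1,i_2,\dots$ independently with $\mathbb{P}(i_t=j)=p_j$, at step $t\ge1$ queries the oracle $h_f(x_{t-1},i_t,\gamma_t)=[f_{i_t}(x_{t-1}),\nabla f_{i_t}(x_{t-1}),\mathrm{prox}^{\gamma_t}_{f_{i_t}}(x_{t-1})]$, and outputs an iterate $x_t\in\mathrm{span}\{x_0,\dots,x_{t-1},\nabla f_{i_1}(x_0),\dots,\nabla f_{i_t}(x_{t-1}),\mathrm{prox}^{\gamma_1}_{f_{i_1}}(x_0),\dots,\mathrm{prox}^{\gamma_t}_{f_{i_t}}(x_{t-1})\}$ (the choice within the span may depend on all previously observed information). Iterate $x_t$ uses $t$ oracle queries. *)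

(* Defs.v *)
From Stdlib Require Import Reals Lra Lia List Arith.
Import ListNotations.
Open Scope R_scope.

Definition idx (m : nat) := {i : nat | (i < m)%nat}.

Fixpoint sumR (m : nat) (f : nat -> R) : R :=
  match m with
  | O => 0
  | S k => sumR k f + f k
  end.

Definition sum_idx (m : nat) (h : idx m -> R) : R :=
  sumR m (fun k => match lt_dec k m with
                   | left H => h (exist _ k H)
                   | right _ => 0
                   end).

Definition vec (d : nat) := idx d -> R.
Definition vzero {d} : vec d := fun _ => 0.
Definition vadd {d} (x y : vec d) : vec d := fun i => x i + y i.
Definition vsub {d} (x y : vec d) : vec d := fun i => x i - y i.
Definition vscale {d} (a : R) (x : vec d) : vec d := fun i => a * x i.
Definition inner {d} (x y : vec d) : R := sum_idx d (fun i => x i * y i).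
Definition norm2 {d} (x : vec d) : R := sqrt (inner x x).

Definition has_gradient {d} (g : vec d -> R) (G : vec d -> vec d) : Prop :=
  forall x eps, 0 < eps -> exists del, 0 < del /\
    forall h : vec d, 0 < norm2 h < del ->
      Rabs (g (vadd x h) - g x - inner (G x) h) <= eps * norm2 h.

Definition L_smooth {d} (L : R) (g : vec d -> R) (G : vec d -> vec d) : Prop :=
  has_gradient g G /\
  forall x y, norm2 (vsub (G x) (G y)) <= L * norm2 (vsub x y).

Definition convex {d} (g : vec d -> R) : Prop :=
  forall x y (lam : R), 0 <= lam <= 1 ->
    g (vadd (vscale lam x) (vscale (1 - lam) y)) <= lam * g x + (1 - lam) * g y.

Definition is_prox {d} (g : vec d -> R) (gamma : R) (x u : vec d) : Prop :=
  forall v, g u + (norm2 (vsub x u))^2 / (2 * gamma)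
            <= g v + (norm2 (vsub x v))^2 / (2 * gamma).

Definition in_span {d} (l : list (vec d)) (v : vec d) : Prop :=
  exists c : nat -> R, forall j,
    v j = sumR (length l) (fun k => c k * nth k l vzero j).

(* One oracle observation: (index i_t, f_{i_t}(x_{t-1}), grad, prox). *)
Record obs (n d : nat) := mkObs {
  o_idx : idx n; o_val : R; o_grad : vec d; o_prox : vec d }.
Arguments o_idx {n d}. Arguments o_val {n d}.
Arguments o_grad {n d}. Arguments o_prox {n d}.

(* A PIFO algorithm in dimension d for n functions. Histories are lists of
   observations, NEWEST FIRST; [next h] is the iterate x_t output after the
   t = length h observations in h. *)
Record pifo (n d : nat) := mkPifo {
  prob : idx n -> R;
  x_init : vec d;
  gam : nat -> R;             (* gamma_t, t >= 1 *)
  next : list (obs n d) -> vec d }.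
Arguments prob {n d}. Arguments x_init {n d}.
Arguments gam {n d}. Arguments next {n d}.

Definition cur {n d} (A : pifo n d) (h : list (obs n d)) : vec d :=
  match h with [] => x_init A | _ => next A h end.

Fixpoint prev_points {n d} (A : pifo n d) (h : list (obs n d)) : list (vec d) :=
  match h with
  | [] => []
  | _ :: h' => cur A h' :: prev_points A h'
  end.

Definition valid_pifo {n d} (A : pifo n d) : Prop :=
  (forall j, 0 <= prob A j) /\
  sum_idx n (prob A) = 1 /\
  (forall t, (1 <= t)%nat -> 0 < gam A t) /\
  (forall h : list (obs n d), h <> [] ->
     in_span (prev_points A h ++ map o_grad h ++ map o_prox h) (next A h)).

Fixpoint history {n d} (A : pifo n d)
    (f : idx n -> vec d -> R) (G : idx n -> vec d -> vec d)
    (P : idx n -> R -> vec d -> vec d) (s : list (idx n)) : list (obs n d) :=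
  match s with
  | [] => []
  | i :: s' =>
      let h := history A f G P s' in
      let x := cur A h in
      mkObs n d i (f i x) (G i x) (P i (gam A (S (length s'))) x) :: h
  end.

(* Expectation of g(i_t, ..., i_1) when the i_k are i.i.d. with law p. *)
Fixpoint expect {n} (p : idx n -> R) (t : nat) (g : list (idx n) -> R) : R :=
  match t with
  | O => g []
  | S t' => expect p t' (fun s => sum_idx n (fun j => p j * g (j :: s)))
  end.

Definition favg {n d} (f : idx n -> vec d -> R) (x : vec d) : R :=
  sum_idx n (fun i => f i x) / INR n.

(* Main.v *)
Require Import Defs.
From Stdlib Require Import Reals List Lra Lia Psatz Arith ZArith FunctionalExtensionality ProofIrrelevance Classical.
Import ListNotations.
Open Scope R_scope.

Lemma sumR_ext m f g : (forall k, (k < m)%nat -> f k = g k) -> sumR m f = sumR m g.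
Proof. induction m; simpl; intros H; auto. rewrite IHm by (intros; apply H; lia). rewrite H by lia; auto. Qed.

Lemma sumR_add m f g : sumR m (fun k => f k + g k) = sumR m f + sumR m g.
Proof. induction m; simpl; [ring|]. rewrite IHm; ring. Qed.

Lemma sumR_scal m a f : sumR m (fun k => a * f k) = a * sumR m f.
Proof. induction m; simpl; [ring|]. rewrite IHm; ring. Qed.

Lemma sumR_scalr m a f : sumR m (fun k => f k * a) = sumR m f * a.
Proof. induction m; simpl; [ring|]. rewrite IHm; ring. Qed.

Lemma sumR_allzero m f : (forall k, (k < m)%nat -> f k = 0) -> sumR m f = 0.
Proof. induction m; simpl; intros H; auto. rewrite IHm by (intros; apply H; lia). rewrite H by lia; ring. Qed.

Lemma sumR_le m f g : (forall k, (k<m)%nat -> f k <= g k) -> sumR m f <= sumR m g.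
Proof. induction m; simpl; intros H; [lra|]. pose proof (H m ltac:(lia)). pose proof (IHm ltac:(intros; apply H; lia)). lra. Qed.

Lemma sumR_nonneg m f : (forall k, (k<m)%nat -> 0 <= f k) -> 0 <= sumR m f.
Proof. intros H. rewrite <- (sumR_allzero m (fun _ => 0)) by auto. apply sumR_le; auto. Qed.

Lemma sumR_split a b f : sumR (a+b) f = sumR a f + sumR b (fun i => f (a+i)%nat).
Proof. induction b; simpl. rewrite Nat.add_0_r; ring. rewrite Nat.add_succ_r; simpl; rewrite IHb; ring. Qed.

Lemma sumR_mono_len a b f : (a <= b)%nat -> (forall k, 0 <= f k) -> sumR a f <= sumR b f.
Proof. intros Hab Hf. replace b with (a + (b - a))%nat by lia. rewrite sumR_split.
  pose proof (sumR_nonneg (b-a) (fun i => f (a+i)%nat) ltac:(intros; apply Hf)). lra. Qed.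

Lemma sumR_swap m n F : sumR m (fun i => sumR n (fun j => F i j)) = sumR n (fun j => sumR m (fun i => F i j)).
Proof. induction m; simpl. symmetry; apply sumR_allzero; auto.
  rewrite IHm. rewrite <- sumR_add. reflexivity. Qed.

Lemma sumR_unique m F i0 : (i0 < m)%nat -> (forall k, (k<m)%nat -> k <> i0 -> F k = 0) -> sumR m F = F i0.
Proof. induction m; intros Hi H; [lia|]. simpl. destruct (Nat.eq_dec i0 m).
  - subst. rewrite sumR_allzero; [ring|]. intros; apply H; lia.
  - rewrite IHm by (try lia; intros; apply H; lia). rewrite (H m) by lia. ring. Qed.

Lemma sumR_sq_zero m f : sumR m (fun k => f k * f k) = 0 -> forall k, (k<m)%nat -> f k = 0.
Proof. induction m; simpl; intros H k Hk; [lia|].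
  pose proof (sumR_nonneg m (fun k => f k * f k) ltac:(intros; nra)).
  assert (f m * f m = 0) by nra. assert (sumR m (fun k => f k * f k) = 0) by nra.
  destruct (Nat.eq_dec k m). subst; nra. apply IHm; auto; lia. Qed.

Definition lv {d} (z : vec d) (k : nat) : R :=
  match lt_dec k d with left H => z (exist _ k H) | right _ => 0 end.

Lemma inner_lv {d} (x y : vec d) : inner x y = sumR d (fun k => lv x k * lv y k).
Proof. unfold inner, sum_idx, lv. apply sumR_ext; intros. destruct lt_dec; ring. Qed.

Lemma lv_ext {d} (x y : vec d) : (forall k, lv x k = lv y k) -> x = y.
Proof. intros H. apply functional_extensionality. intros [k Hk]. specialize (H k). unfold lv in H.
  destruct lt_dec; [|contradiction]. rewrite (proof_irrelevance _ Hk l). auto. Qed.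

Lemma lv_out {d} (z : vec d) k : (d <= k)%nat -> lv z k = 0.
Proof. intros; unfold lv; destruct lt_dec; auto; lia. Qed.

Lemma lv_add {d} (x y : vec d) k : lv (vadd x y) k = lv x k + lv y k.
Proof. unfold lv, vadd; destruct lt_dec; ring. Qed.
Lemma lv_sub {d} (x y : vec d) k : lv (vsub x y) k = lv x k - lv y k.
Proof. unfold lv, vsub; destruct lt_dec; ring. Qed.
Lemma lv_scale {d} a (x : vec d) k : lv (vscale a x) k = a * lv x k.
Proof. unfold lv, vscale; destruct lt_dec; ring. Qed.
Lemma lv_zero {d} k : lv (@vzero d) k = 0.
Proof. unfold lv, vzero; destruct lt_dec; ring. Qed.

Definition e {d} (j : nat) : vec d := fun i => if Nat.eq_dec (proj1_sig i) j then 1 else 0.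

Lemma lv_e_same {d} j : (j < d)%nat -> lv (@e d j) j = 1.
Proof. intros; unfold lv, e; destruct lt_dec; [|lia]. simpl. destruct Nat.eq_dec; auto; lia. Qed.
Lemma lv_e_diff {d} j k : k <> j -> lv (@e d j) k = 0.
Proof. intros; unfold lv, e; destruct lt_dec; auto. simpl. destruct Nat.eq_dec; auto; lia. Qed.

Lemma inner_e_l {d} j (h : vec d) : inner (e j) h = lv h j.
Proof. rewrite inner_lv. destruct (lt_dec j d).
  - rewrite (sumR_unique d _ j) by (auto; intros; rewrite lv_e_diff by auto; ring).
    rewrite lv_e_same by auto; ring.
  - rewrite lv_out by lia. apply sumR_allzero; intros. rewrite lv_e_diff by lia; ring. Qed.

Definition vsum {d} (P : nat) (F : nat -> vec d) : vec d := fun i => sumR P (fun k => F k i).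

Lemma lv_vsum {d} P (F : nat -> vec d) j : lv (vsum P F) j = sumR P (fun k => lv (F k) j).
Proof. unfold lv, vsum; destruct lt_dec; auto. symmetry; apply sumR_allzero; auto. Qed.

Lemma inner_sym {d} (x y : vec d) : inner x y = inner y x.
Proof. rewrite !inner_lv. apply sumR_ext; intros; ring. Qed.
Lemma inner_add_l {d} (x y z : vec d) : inner (vadd x y) z = inner x z + inner y z.
Proof. rewrite !inner_lv, <- sumR_add. apply sumR_ext; intros; rewrite lv_add; ring. Qed.
Lemma inner_sub_l {d} (x y z : vec d) : inner (vsub x y) z = inner x z - inner y z.
Proof. rewrite !inner_lv. replace (sumR d (fun k => lv x k * lv z k) - sumR d (fun k => lv y k * lv z k))
  with (sumR d (fun k => lv x k * lv z k) + (-1) * sumR d (fun k => lv y k * lv z k)) by ring.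
  rewrite <- (sumR_scal _ (-1)), <- sumR_add.
  apply sumR_ext; intros; rewrite lv_sub; ring. Qed.
Lemma inner_scale_l {d} a (x z : vec d) : inner (vscale a x) z = a * inner x z.
Proof. rewrite !inner_lv, <- sumR_scal. apply sumR_ext; intros; rewrite lv_scale; ring. Qed.
Lemma inner_add_r {d} (x y z : vec d) : inner z (vadd x y) = inner z x + inner z y.
Proof. rewrite !(inner_sym z). apply inner_add_l. Qed.
Lemma inner_sub_r {d} (x y z : vec d) : inner z (vsub x y) = inner z x - inner z y.
Proof. rewrite !(inner_sym z). apply inner_sub_l. Qed.
Lemma inner_scale_r {d} a (x z : vec d) : inner z (vscale a x) = a * inner z x.
Proof. rewrite !(inner_sym z). apply inner_scale_l. Qed.
Lemma inner_nonneg {d} (x : vec d) : 0 <= inner x x.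
Proof. rewrite inner_lv. apply sumR_nonneg; intros; nra. Qed.
Lemma norm2_sq {d} (x : vec d) : norm2 x ^ 2 = inner x x.
Proof. unfold norm2. rewrite pow2_sqrt; auto. apply inner_nonneg. Qed.
Lemma norm2_nonneg {d} (x : vec d) : 0 <= norm2 x.
Proof. apply sqrt_pos. Qed.

Lemma inner_vsum_l {d} P (F : nat -> vec d) h : inner (vsum P F) h = sumR P (fun k => inner (F k) h).
Proof. rewrite inner_lv. erewrite sumR_ext.
  2:{ intros. rewrite lv_vsum, <- sumR_scalr. reflexivity. }
  rewrite sumR_swap. apply sumR_ext; intros. rewrite inner_lv; auto. Qed.

Lemma inner_zero_vec {d} (x : vec d) : inner x x = 0 -> forall k, lv x k = 0.
Proof. intros H k. rewrite inner_lv in H. destruct (lt_dec k d).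
  eapply (sumR_sq_zero d (lv x)); eauto. apply lv_out; lia. Qed.

Definition uH {d} (x0 : vec d) : vec d := vsub x0 (vscale (norm2 x0) (e 0)).
Definition Hh {d} (x0 v : vec d) : vec d :=
  vsub v (vscale (2 * inner (uH x0) v / inner (uH x0) (uH x0)) (uH x0)).

Lemma Hh_id_case {d} (x0 : vec d) : inner (uH x0) (uH x0) = 0 -> forall v, Hh x0 v = v.
Proof. intros H v. apply lv_ext; intros k. unfold Hh. rewrite lv_sub, lv_scale.
  rewrite (inner_zero_vec _ H k). ring. Qed.

Lemma lv_Hh {d} (x0 v : vec d) k :
  lv (Hh x0 v) k = lv v k - (2 * inner (uH x0) v / inner (uH x0) (uH x0)) * lv (uH x0) k.
Proof. unfold Hh. rewrite lv_sub, lv_scale. auto. Qed.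

Lemma Hh_vsum {d} (x0 : vec d) K (c : nat -> R) (w : nat -> vec d) j :
  lv (Hh x0 (vsum K (fun k => vscale (c k) (w k)))) j = sumR K (fun k => c k * lv (Hh x0 (w k)) j).
Proof. rewrite lv_Hh, lv_vsum. rewrite (inner_sym (uH x0)), inner_vsum_l.
  erewrite (sumR_ext K (fun k => inner _ _)). 2:{ intros. rewrite inner_scale_l, inner_sym. reflexivity. }
  erewrite (sumR_ext K (fun k => c k * lv (Hh x0 (w k)) j)). 2:{ intros. rewrite lv_Hh. reflexivity. }
  erewrite (sumR_ext K (fun k => lv (vscale _ _) j)). 2:{ intros. rewrite lv_scale. reflexivity. }

  set (uu := inner (uH x0) (uH x0)).
  replace (sumR K (fun k => c k * (lv (w k) j - 2 * inner (uH x0) (w k) / uu * lv (uH x0) j)))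
   with (sumR K (fun k => c k * lv (w k) j) + (- (2 / uu * lv (uH x0) j)) * sumR K (fun k => c k * inner (uH x0) (w k))).
  2:{ rewrite <- sumR_scal, <- sumR_add. apply sumR_ext; intros. unfold Rdiv. ring. }
  unfold Rdiv. ring. Qed.

Lemma Hh_lin {d} (x0 x y : vec d) a b :
  Hh x0 (vadd (vscale a x) (vscale b y)) = vadd (vscale a (Hh x0 x)) (vscale b (Hh x0 y)).
Proof. apply lv_ext; intros k. rewrite lv_add, !lv_scale, !lv_Hh, lv_add, !lv_scale.
  rewrite inner_add_r, !inner_scale_r. unfold Rdiv. ring. Qed.

Lemma Hh_sub {d} (x0 x y : vec d) : Hh x0 (vsub x y) = vsub (Hh x0 x) (Hh x0 y).
Proof. apply lv_ext; intros k. rewrite lv_sub, !lv_Hh, lv_sub, inner_sub_r. unfold Rdiv. ring. Qed.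

Lemma Hh_add {d} (x0 x y : vec d) : Hh x0 (vadd x y) = vadd (Hh x0 x) (Hh x0 y).
Proof. apply lv_ext; intros k. rewrite lv_add, !lv_Hh, lv_add, inner_add_r. unfold Rdiv. ring. Qed.

Lemma Hh_sym {d} (x0 x y : vec d) : inner (Hh x0 x) y = inner x (Hh x0 y).
Proof. unfold Hh. rewrite inner_sub_l, inner_sub_r, inner_scale_l, inner_scale_r.
  rewrite (inner_sym (uH x0) y), (inner_sym x (uH x0)). unfold Rdiv; ring. Qed.

Lemma Hh_invol {d} (x0 x : vec d) : Hh x0 (Hh x0 x) = x.
Proof. destruct (Req_dec (inner (uH x0) (uH x0)) 0) as [H|H].
  - rewrite !Hh_id_case; auto.
  - apply lv_ext; intros k. rewrite lv_Hh. unfold Hh at 1 2. rewrite lv_sub, lv_scale.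
    rewrite inner_sub_r, inner_scale_r. field. auto. Qed.

Lemma inner_Hh {d} (x0 x y : vec d) : inner (Hh x0 x) (Hh x0 y) = inner x y.
Proof. rewrite Hh_sym, Hh_invol. auto. Qed.

Lemma norm2_Hh {d} (x0 x : vec d) : norm2 (Hh x0 x) = norm2 x.
Proof. unfold norm2. rewrite inner_Hh. auto. Qed.

Lemma Hh_x0 {d} (x0 : vec d) : (1 <= d)%nat -> Hh x0 x0 = vscale (norm2 x0) (e 0).
Proof. intros Hd. destruct (Req_dec (inner (uH x0) (uH x0)) 0) as [H|H].
  - rewrite Hh_id_case by auto. apply lv_ext; intros k. pose proof (inner_zero_vec _ H k) as Hk.
    unfold uH in Hk. rewrite lv_sub in Hk. lra.
  - assert (E1 : inner (uH x0) x0 = inner x0 x0 - norm2 x0 * lv x0 0).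
    { unfold uH. rewrite inner_sub_l, inner_scale_l, inner_e_l. auto. }
    assert (E2 : inner (uH x0) (uH x0) = 2 * (inner x0 x0 - norm2 x0 * lv x0 0)).
    { unfold uH at 2. rewrite inner_sub_r, inner_scale_r, E1. unfold uH.
      rewrite inner_sub_l, inner_scale_l, (inner_sym x0 (e 0)), !inner_e_l, lv_e_same by lia.
      rewrite <- norm2_sq. ring. }
    apply lv_ext; intros k. rewrite lv_Hh, E1, E2. unfold uH. rewrite lv_sub.
    rewrite E2 in H. field. lra. Qed.

Record cpar := mkC { pu0 : R; pb : R; pw : R; ps : nat; pP : nat }.

Definition dl {d} (c : cpar) (z : vec d) (i : nat) : R :=
  lv z (ps c + 2*i) - lv z (ps c + 2*i + 1).
Definition gq {d} (c : cpar) (z : vec d) : R :=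
  pu0 c / 2 * (pb c - lv z 1)^2 + pw c / 2 * sumR (pP c) (fun i => dl c z i ^ 2).
Definition pv {d} (c : cpar) (co : nat -> R) : vec d :=
  vsum (pP c) (fun i => vscale (co i) (vsub (e (ps c + 2*i)) (e (ps c + 2*i + 1)))).
Definition gg {d} (c : cpar) (z : vec d) : vec d :=
  vadd (vscale (pu0 c * (lv z 1 - pb c)) (e 1)) (vscale (pw c) (pv c (dl c z))).
Definition ggl {d} (c : cpar) (h : vec d) : vec d :=
  vadd (vscale (pu0 c * lv h 1) (e 1)) (vscale (pw c) (pv c (dl c h))).
Definition Qf {d} (c : cpar) (h k : vec d) : R :=
  pu0 c * lv h 1 * lv k 1 + pw c * sumR (pP c) (fun i => dl c h i * dl c k i).
Definition Pg {d} (c : cpar) (g : R) (x : vec d) : vec d :=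
  vsub (vsub x (vscale (g * pu0 c * ((lv x 1 - pb c) / (1 + g * pu0 c))) (e 1)))
       (vscale (g * pw c) (pv c (fun i => dl c x i / (1 + 2 * g * pw c)))).

Definition goodc (L : R) (d : nat) (c : cpar) : Prop :=
  0 <= pu0 c <= L /\ 0 <= pw c /\ 2 * pw c <= L /\ (pu0 c = 0 \/ (2 <= ps c)%nat) /\
  (1 <= ps c)%nat /\ (ps c + 2 * pP c <= d)%nat /\ (2 <= d)%nat.

Lemma lv_pv {d} c co j : lv (@pv d c co) j =
  sumR (pP c) (fun i => co i * (lv (@e d (ps c + 2*i)) j - lv (@e d (ps c + 2*i+1)) j)).
Proof. unfold pv. rewrite lv_vsum. apply sumR_ext; intros. rewrite lv_scale, lv_sub. auto. Qed.

Lemma inner_pv_l {d} c co (h : vec d) : inner (pv c co) h = sumR (pP c) (fun i => co i * dl c h i).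
Proof. unfold pv. rewrite inner_vsum_l. apply sumR_ext; intros.
  rewrite inner_scale_l, inner_sub_l, !inner_e_l. auto. Qed.

Lemma dl_add {d} c (x y : vec d) i : dl c (vadd x y) i = dl c x i + dl c y i.
Proof. unfold dl; rewrite !lv_add; ring. Qed.
Lemma dl_sub {d} c (x y : vec d) i : dl c (vsub x y) i = dl c x i - dl c y i.
Proof. unfold dl; rewrite !lv_sub; ring. Qed.
Lemma dl_scale {d} c a (x : vec d) i : dl c (vscale a x) i = a * dl c x i.
Proof. unfold dl; rewrite !lv_scale; ring. Qed.

Lemma inner_gg {d} c (z h : vec d) : inner (gg c z) h =
  pu0 c * (lv z 1 - pb c) * lv h 1 + pw c * sumR (pP c) (fun i => dl c z i * dl c h i).
Proof. unfold gg. rewrite inner_add_l, !inner_scale_l, inner_e_l, inner_pv_l. ring. Qed.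

Lemma inner_ggl {d} c (h k : vec d) : inner (ggl c h) k = Qf c h k.
Proof. unfold ggl, Qf. rewrite inner_add_l, !inner_scale_l, inner_e_l, inner_pv_l. ring. Qed.

Lemma gq_expand {d} c (z h : vec d) : gq c (vadd z h) = gq c z + inner (gg c z) h + 1/2 * Qf c h h.
Proof. unfold gq, Qf. rewrite inner_gg, lv_add.
  erewrite (sumR_ext _ (fun i => dl c (vadd z h) i ^ 2)).
  2:{ intros. rewrite dl_add. reflexivity. }
  replace (sumR (pP c) (fun i => (dl c z i + dl c h i) ^ 2)) with
   (sumR (pP c) (fun i => dl c z i ^ 2) + 2 * sumR (pP c) (fun i => dl c z i * dl c h i)
     + sumR (pP c) (fun i => dl c h i * dl c h i)).
  2:{ rewrite <- sumR_scal, <- !sumR_add. apply sumR_ext; intros; ring. }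
  field. Qed.

Lemma sumR_sub m f g : sumR m (fun k => f k - g k) = sumR m f - sumR m g.
Proof. induction m; simpl; [ring|]. rewrite IHm; ring. Qed.

Lemma gg_sub {d} c (x y : vec d) : vsub (gg c x) (gg c y) = ggl c (vsub x y).
Proof. apply lv_ext; intros k. unfold gg, ggl. rewrite !lv_sub, !lv_add, !lv_scale, !lv_pv.
  erewrite (sumR_ext _ (fun i => dl c (vsub x y) i * _)). 2:{ intros. rewrite dl_sub. reflexivity. }
  erewrite (sumR_ext _ (fun i => (dl c x i - dl c y i) * _)). 2:{ intros. rewrite Rmult_minus_distr_r. reflexivity. }
  rewrite sumR_sub. ring. Qed.

Lemma Qf_nonneg {d} c (h : vec d) : 0 <= pu0 c -> 0 <= pw c -> 0 <= Qf c h h.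
Proof. intros. unfold Qf. assert (0 <= sumR (pP c) (fun i => dl c h i * dl c h i)).
  apply sumR_nonneg; intros; nra. nra. Qed.

Lemma Qf_sym {d} c (h k : vec d) : Qf c h k = Qf c k h.
Proof. unfold Qf. f_equal. ring. f_equal. apply sumR_ext; intros; ring. Qed.

Lemma Qf_quad {d} c (h k : vec d) t :
  Qf c (vadd h (vscale t k)) (vadd h (vscale t k)) = Qf c h h + 2 * t * Qf c h k + t^2 * Qf c k k.
Proof. unfold Qf. rewrite lv_add, lv_scale.
  erewrite (sumR_ext _ (fun i => dl c (vadd h _) i * _)). 2:{ intros. rewrite dl_add, dl_scale. reflexivity. }
  replace (sumR (pP c) (fun i => (dl c h i + t * dl c k i) * (dl c h i + t * dl c k i))) with
   (sumR (pP c) (fun i => dl c h i * dl c h i) + 2 * t * sumR (pP c) (fun i => dl c h i * dl c k i)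
     + t^2 * sumR (pP c) (fun i => dl c k i * dl c k i)).
  2:{ rewrite <- !sumR_scal, <- !sumR_add. apply sumR_ext; intros; ring. }
  ring. Qed.

Lemma disc_lemma a b cc : (forall t, 0 <= a + 2 * t * b + t^2 * cc) -> b^2 <= a * cc.
Proof. intros H. destruct (Req_dec cc 0) as [Hc|Hc].
  - subst. destruct (Req_dec b 0). subst; nra.
    specialize (H (- (a + 1) / (2 * b))).
    replace (2 * (- (a + 1) / (2 * b)) * b) with (-(a+1)) in H by (field; auto). nra.
  - assert (Hpos : 0 < cc).
    { destruct (Rlt_dec 0 cc); auto. exfalso.
      assert (cc < 0) by lra.
      set (T := sqrt ((Rabs a + 1) / (- cc))).
      assert (HT : T^2 = (Rabs a + 1) / (- cc)).
      { unfold T. rewrite pow2_sqrt; auto. apply Rlt_le, Rdiv_lt_0_compat; [pose proof (Rabs_pos a)|]; lra. }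
      pose proof (H T) as H1. pose proof (H (-T)) as H2.
      assert (T^2 * cc = - (Rabs a + 1)) by (rewrite HT; field; lra).
      pose proof (Rle_abs a). nra. }
    specialize (H (- b / cc)).
    replace (a + 2 * (- b / cc) * b + (- b / cc) ^ 2 * cc) with (a - b^2 / cc) in H by (field; auto).
    apply Rmult_le_reg_r with (/ cc). apply Rinv_0_lt_compat; lra.
    replace (a * cc * / cc) with a by (field; auto). unfold Rdiv in H. lra. Qed.

Lemma Qf_CS {d} c (h k : vec d) : 0 <= pu0 c -> 0 <= pw c -> Qf c h k ^ 2 <= Qf c h h * Qf c k k.
Proof. intros. apply disc_lemma. intros t. rewrite <- Qf_quad. apply Qf_nonneg; auto. Qed.

Lemma pair_sum P G : sumR P (fun i => G (2*i)%nat + G (2*i+1)%nat) = sumR (2*P) G.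
Proof. induction P. simpl; ring. replace (2 * S P)%nat with (S (S (2*P))) by lia.
  cbn [sumR]. rewrite IHP. replace (2 * P + 1)%nat with (S (2*P)) by lia. ring. Qed.

Lemma Qf_bound {d} L c (h : vec d) : goodc L d c -> Qf c h h <= L * inner h h.
Proof. intros (Hu & Hw & Hw2 & Hs & Hs1 & HsP & Hd).
  set (F := fun j => lv h j * lv h j).
  assert (HF : forall j, 0 <= F j) by (intros; unfold F; nra).
  assert (E1 : sumR (pP c) (fun i => dl c h i * dl c h i) <= 2 * sumR (2 * pP c) (fun j => F (ps c + j)%nat)).
  { rewrite <- pair_sum, <- sumR_scal. apply sumR_le; intros. unfold dl, F.
    rewrite !Nat.add_assoc. set (a := lv h (ps c + 2 * k)%nat). set (b := lv h (ps c + 2 * k + 1)%nat).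
    pose proof (Rle_0_sqr (a + b)). unfold Rsqr in *. lra. }
  assert (E2 : sumR (ps c) F + sumR (2 * pP c) (fun j => F (ps c + j)%nat) <= inner h h).
  { rewrite inner_lv, <- sumR_split. apply sumR_mono_len; auto. }
  assert (E3 : 0 <= sumR (ps c) F) by (apply sumR_nonneg; auto).
  unfold Qf. destruct Hs as [Hs|Hs].
  - rewrite Hs. set (S := sumR (pP c) (fun i => dl c h i * dl c h i)) in *.
    set (S2 := sumR (2 * pP c) (fun j => F (ps c + j)%nat)) in *.
    assert (0 <= S2) by (apply sumR_nonneg; auto).
    assert (pw c * S <= pw c * (2 * S2)) by (apply Rmult_le_compat_l; lra).
    assert (2 * pw c * S2 <= L * S2) by (apply Rmult_le_compat_r; lra).
    assert (L * S2 <= L * inner h h) by (apply Rmult_le_compat_l; lra). lra.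
  - assert (E4 : F 1%nat <= sumR (ps c) F).
    { apply Rle_trans with (sumR 2 F). simpl. pose proof (HF 0%nat). lra. apply sumR_mono_len; auto. }
    assert (0 <= sumR (2 * pP c) (fun j => F (ps c + j)%nat)) by (apply sumR_nonneg; auto).
    set (S := sumR (pP c) (fun i => dl c h i * dl c h i)) in *.
    set (S2 := sumR (2 * pP c) (fun j => F (ps c + j)%nat)) in *.
    assert (pw c * S <= pw c * (2 * S2)) by (apply Rmult_le_compat_l; lra).
    assert (2 * pw c * S2 <= L * S2) by (apply Rmult_le_compat_r; lra).
    assert (pu0 c * F 1%nat <= L * F 1%nat) by (apply Rmult_le_compat_r; auto; lra).
    assert (L * (F 1%nat + S2) <= L * inner h h) by (apply Rmult_le_compat_l; lra).
    unfold F in *. lra. Qed.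

Lemma ggl_bound {d} L c (h : vec d) : goodc L d c -> inner (ggl c h) (ggl c h) <= L^2 * inner h h.
Proof. intros Hg. pose proof (Qf_bound L c h Hg) as B1. pose proof (Qf_bound L c (ggl c h) Hg) as B2.
  destruct Hg as (Hu & Hw & _).
  pose proof (Qf_CS c h (ggl c h) ltac:(lra) ltac:(lra)) as CS.
  assert (E : Qf c h (ggl c h) = inner (ggl c h) (ggl c h)) by (rewrite inner_ggl; auto).
  rewrite E in CS.
  set (X := inner (ggl c h) (ggl c h)) in *.
  set (Y := Qf c (ggl c h) (ggl c h)) in *.
  assert (0 <= X) by apply inner_nonneg. pose proof (Qf_nonneg c h ltac:(lra) ltac:(lra)).
  assert (L0 : 0 <= L) by lra.
  destruct (Req_dec X 0). rewrite H1. pose proof (inner_nonneg h). nra.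
  assert (X <= L * Qf c h h).
  { apply Rmult_le_reg_r with X. lra.
    assert (Qf c h h * Y <= Qf c h h * (L * X)) by (apply Rmult_le_compat_l; lra). nra. }
  assert (L * Qf c h h <= L * (L * inner h h)) by (apply Rmult_le_compat_l; lra). nra. Qed.

Lemma pv_at {d} c co i0 : (i0 < pP c)%nat -> (ps c + 2 * pP c <= d)%nat ->
  lv (@pv d c co) (ps c + 2*i0) = co i0 /\ lv (@pv d c co) (ps c + 2*i0 + 1) = - co i0.
Proof. intros Hi Hd. rewrite !lv_pv. split.
  - rewrite (sumR_unique _ _ i0); auto.
    + rewrite lv_e_same by lia. rewrite lv_e_diff by lia. ring.
    + intros. rewrite !lv_e_diff by lia. ring.
  - rewrite (sumR_unique _ _ i0); auto.
    + rewrite lv_e_same by lia. rewrite lv_e_diff by lia. ring.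
    + intros. rewrite !lv_e_diff by lia. ring. Qed.

Lemma pv_at1 {d} c co : (2 <= ps c)%nat -> lv (@pv d c co) 1 = 0.
Proof. intros. rewrite lv_pv. apply sumR_allzero; intros. rewrite !lv_e_diff by lia. ring. Qed.

Lemma Pg_facts {d} L c g (x : vec d) : goodc L d c -> 0 < g ->
  pu0 c * (lv (Pg c g x) 1 - pb c) = pu0 c * ((lv x 1 - pb c) / (1 + g * pu0 c)) /\
  (forall i, (i < pP c)%nat -> dl c (Pg c g x) i = dl c x i / (1 + 2 * g * pw c)).
Proof. intros (Hu & Hw & Hw2 & Hs & Hs1 & HsP & Hd) Hg. split.
  - destruct Hs as [Hs|Hs]. rewrite Hs; ring.
    unfold Pg. rewrite !lv_sub, !lv_scale, lv_e_same by lia. rewrite pv_at1 by auto.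
    field. nra.
  - intros i Hi. unfold Pg. rewrite !dl_sub, !dl_scale.
    assert (Hdl : dl c (@pv d c (fun i => dl c x i / (1 + 2 * g * pw c))) i
                  = 2 * (dl c x i / (1 + 2 * g * pw c))).
    { set (co := fun i => dl c x i / (1 + 2 * g * pw c)).
      destruct (pv_at c co i Hi HsP) as [A B]. unfold dl at 1.
      rewrite A, B. unfold co. ring. }
    rewrite Hdl.
    assert (He : pu0 c * dl c (@e d 1) i = 0).
    { destruct Hs as [Hs|Hs]. rewrite Hs; ring. unfold dl. rewrite !lv_e_diff by lia. ring. }
    replace (g * pu0 c * ((lv x 1 - pb c) / (1 + g * pu0 c)) * dl c (@e d 1) i) with
      (g * ((lv x 1 - pb c) / (1 + g * pu0 c)) * (pu0 c * dl c (@e d 1) i)) by ring.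
    rewrite He. field. nra. Qed.

Lemma Pg_eq {d} L c g (x : vec d) : goodc L d c -> 0 < g ->
  vsub x (Pg c g x) = vscale g (gg c (Pg c g x)).
Proof. intros Hc Hg. destruct (Pg_facts L c g x Hc Hg) as [A B].
  apply lv_ext; intros k. rewrite lv_sub, lv_scale. unfold gg at 1. rewrite lv_add, !lv_scale.
  rewrite A, lv_pv.
  erewrite (sumR_ext _ (fun i => dl c (Pg c g x) i * _)). 2:{ intros. rewrite B by auto. reflexivity. }
  unfold Pg at 1. rewrite !lv_sub, !lv_scale, lv_pv. ring. Qed.

Lemma vsub_decomp {d} (x v y : vec d) : vsub x v = vsub (vsub x y) (vsub v y).
Proof. apply lv_ext; intros; rewrite !lv_sub; ring. Qed.
Lemma vadd_sub {d} (y v : vec d) : vadd y (vsub v y) = v.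
Proof. apply lv_ext; intros; rewrite lv_add, lv_sub; ring. Qed.

Lemma Pg_opt {d} L c g (x v : vec d) : goodc L d c -> 0 < g ->
  gq c (Pg c g x) + norm2 (vsub x (Pg c g x)) ^ 2 / (2 * g) <= gq c v + norm2 (vsub x v) ^ 2 / (2 * g).
Proof. intros Hc Hg. set (y := Pg c g x).
  pose proof (Pg_eq L c g x Hc Hg) as E. fold y in E.
  assert (G1 : gq c v >= gq c y + inner (gg c y) (vsub v y)).
  { rewrite <- (vadd_sub y v) at 1. rewrite gq_expand. destruct Hc as (Hu & Hw & _).
    pose proof (Qf_nonneg c (vsub v y) ltac:(lra) ltac:(lra)). lra. }
  rewrite !norm2_sq. rewrite (vsub_decomp x v y).
  set (a := vsub x y) in *. set (b := vsub v y) in *.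
  assert (N : inner (vsub a b) (vsub a b) = inner a a - 2 * inner a b + inner b b).
  { rewrite inner_sub_l, !inner_sub_r, (inner_sym b a). ring. }
  rewrite N. rewrite E, !inner_scale_l, !inner_scale_r.
  set (GG := inner (gg c y) (gg c y)) in *. set (Gb := inner (gg c y) b) in *. pose proof (inner_nonneg (gg c y)) as HGG; fold GG in HGG.
  pose proof (inner_nonneg b).
  assert (0 <= inner b b / (2 * g)) by (unfold Rdiv; apply Rmult_le_pos; [lra| apply Rlt_le, Rinv_0_lt_compat; lra]).
  replace ((g * (g * GG) - 2 * (g * Gb) + inner b b) / (2 * g)) with
    (g * GG / 2 - Gb + inner b b / (2 * g)) by (field; lra).
  replace (g * (g * GG) / (2 * g)) with (g * GG / 2) by (field; lra). lra. Qed.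

Definition fF {d} (x0 : vec d) c (x : vec d) : R := gq c (Hh x0 x).
Definition GF {d} (x0 : vec d) c (x : vec d) : vec d := Hh x0 (gg c (Hh x0 x)).
Definition PF {d} (x0 : vec d) c (g : R) (x : vec d) : vec d := Hh x0 (Pg c g (Hh x0 x)).

Lemma F_expand {d} (x0 : vec d) c x h :
  fF x0 c (vadd x h) = fF x0 c x + inner (GF x0 c x) h + 1/2 * Qf c (Hh x0 h) (Hh x0 h).
Proof. unfold fF, GF. rewrite Hh_add, gq_expand, Hh_sym. auto. Qed.

Lemma norm2_le_scale {d} (a b : vec d) L : 0 <= L -> inner a a <= L^2 * inner b b -> norm2 a <= L * norm2 b.
Proof. intros HL H. unfold norm2. rewrite <- (sqrt_pow2 L) by auto. rewrite <- sqrt_mult.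
  apply sqrt_le_1_alt. lra. apply pow2_ge_0. apply inner_nonneg. Qed.

Lemma F_smooth {d} (x0 : vec d) L c : goodc L d c -> 0 < L -> L_smooth L (fF x0 c) (GF x0 c).
Proof. intros Hc HL. split.
  - intros x eps Heps. exists (eps / L). split. apply Rdiv_lt_0_compat; auto.
    intros h [Hh1 Hh2]. rewrite F_expand.
    pose proof (Qf_bound L c (Hh x0 h) Hc) as B. rewrite inner_Hh, <- norm2_sq in B.
    destruct Hc as (Hu & Hw & _). pose proof (Qf_nonneg c (Hh x0 h) ltac:(lra) ltac:(lra)).
    replace (fF x0 c x + inner (GF x0 c x) h + 1 / 2 * Qf c (Hh x0 h) (Hh x0 h) - fF x0 c x - inner (GF x0 c x) h)
      with (1/2 * Qf c (Hh x0 h) (Hh x0 h)) by ring.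
    rewrite Rabs_pos_eq by lra.
    assert (L * norm2 h < eps). { apply (Rmult_lt_compat_l L) in Hh2; auto. unfold Rdiv in Hh2.
      replace (L * (eps * / L)) with eps in Hh2 by (field; lra). auto. }
    assert (L * norm2 h ^ 2 <= eps * norm2 h). { replace (L * norm2 h ^2) with ((L * norm2 h) * norm2 h) by ring.
      apply Rmult_le_compat_r; lra. }
    nra.
  - intros x y. unfold GF. rewrite <- Hh_sub, norm2_Hh, gg_sub, <- Hh_sub.
    rewrite <- (norm2_Hh x0 (vsub x y)). apply norm2_le_scale. lra. apply ggl_bound; auto. Qed.

Lemma F_first_order {d} (x0 : vec d) L c x y : goodc L d c ->
  fF x0 c x + inner (GF x0 c x) (vsub y x) <= fF x0 c y.
Proof. intros Hc. rewrite <- (vadd_sub x y) at 2. rewrite F_expand. destruct Hc as (Hu & Hw & _).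
  pose proof (Qf_nonneg c (Hh x0 (vsub y x)) ltac:(lra) ltac:(lra)). lra. Qed.

Lemma F_convex {d} (x0 : vec d) L c : goodc L d c -> convex (fF x0 c).
Proof. intros Hc x y lam Hl. set (z := vadd (vscale lam x) (vscale (1 - lam) y)).
  pose proof (F_first_order x0 L c z x Hc) as A. pose proof (F_first_order x0 L c z y Hc) as B.
  rewrite inner_sub_r in A, B.
  assert (Ez : inner (GF x0 c z) z = lam * inner (GF x0 c z) x + (1 - lam) * inner (GF x0 c z) y).
  { unfold z at 2. rewrite inner_add_r, !inner_scale_r. auto. }
  apply Rmult_le_compat_l with (r := lam) in A; [|lra].
  apply Rmult_le_compat_l with (r := 1 - lam) in B; [|lra]. nra. Qed.

Lemma norm2_Hh_l {d} (x0 a b : vec d) : norm2 (vsub a (Hh x0 b)) = norm2 (vsub (Hh x0 a) b).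
Proof. rewrite <- (norm2_Hh x0 (vsub a (Hh x0 b))), Hh_sub, Hh_invol. auto. Qed.
Lemma norm2_Hh_both {d} (x0 a b : vec d) : norm2 (vsub a b) = norm2 (vsub (Hh x0 a) (Hh x0 b)).
Proof. rewrite <- Hh_sub, norm2_Hh. auto. Qed.

Lemma F_prox {d} (x0 : vec d) L c g x : goodc L d c -> 0 < g -> is_prox (fF x0 c) g x (PF x0 c g x).
Proof. intros Hc Hg v. unfold fF, PF. rewrite Hh_invol.
  rewrite (norm2_Hh_l x0 x), (norm2_Hh_both x0 x v).
  apply Pg_opt with L; auto. Qed.

Definition Zc {d} (k : nat) (z : vec d) : Prop := forall j, (k < j)%nat -> lv z j = 0.

Lemma Zc_mono {d} k k' (z : vec d) : (k <= k')%nat -> Zc k z -> Zc k' z.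
Proof. intros H Z j Hj. apply Z; lia. Qed.
Lemma Zc_e {d} k j : (j <= k)%nat -> Zc k (@e d j).
Proof. intros H i Hi. apply lv_e_diff; lia. Qed.
Lemma Zc_add {d} k (x y : vec d) : Zc k x -> Zc k y -> Zc k (vadd x y).
Proof. intros A B j Hj. rewrite lv_add, A, B by auto; ring. Qed.
Lemma Zc_sub {d} k (x y : vec d) : Zc k x -> Zc k y -> Zc k (vsub x y).
Proof. intros A B j Hj. rewrite lv_sub, A, B by auto; ring. Qed.
Lemma Zc_scale {d} k a (x : vec d) : Zc k x -> Zc k (vscale a x).
Proof. intros A j Hj. rewrite lv_scale, A by auto; ring. Qed.
Lemma Zc_zero_coef {d} k a (x : vec d) : a = 0 -> Zc k (vscale a x).
Proof. intros A j Hj. rewrite lv_scale, A; ring. Qed.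

Lemma Zc_pv {d} k c co : (forall i, (k < ps c + 2*i)%nat -> co i = 0) -> Zc (S k) (@pv d c co).
Proof. intros H j Hj. rewrite lv_pv. apply sumR_allzero; intros i Hi.
  destruct (le_lt_dec (ps c + 2*i) k).
  - rewrite !lv_e_diff by lia. ring.
  - rewrite H by auto. ring. Qed.

Lemma dl_Z {d} k c (z : vec d) i : Zc k z -> (k < ps c + 2*i)%nat -> dl c z i = 0.
Proof. intros Z H. unfold dl. rewrite !Z by lia. ring. Qed.

Lemma gg_Z {d} k c (z : vec d) : Zc k z -> Zc (S k) (gg c z).
Proof. intros Z. unfold gg. apply Zc_add. apply Zc_scale, Zc_e; lia.
  apply Zc_scale, Zc_pv. intros; apply (dl_Z k); auto. Qed.

Lemma Pg_Z {d} k c g (x : vec d) : Zc k x -> Zc (S k) (Pg c g x).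
Proof. intros Z. unfold Pg. apply Zc_sub. apply Zc_sub. apply (Zc_mono k); auto.
  apply Zc_scale, Zc_e; lia.
  apply Zc_scale, Zc_pv. intros; rewrite (dl_Z k) by auto; unfold Rdiv; ring. Qed.

Lemma pv_P0 {d} c co : pP c = 0%nat -> Zc 0 (@pv d c co).
Proof. intros H j Hj. rewrite lv_pv, H. reflexivity. Qed.

Lemma gg_Z0 {d} k c (z : vec d) : pb c = 0 -> pP c = 0%nat -> Zc k z -> Zc k (gg c z).
Proof. intros Hb HP Z. unfold gg. apply Zc_add.
  - destruct k. apply Zc_zero_coef. rewrite Z by lia. rewrite Hb; ring.
    apply Zc_scale, Zc_e; lia.
  - apply Zc_scale. apply (Zc_mono 0); [lia|]. apply pv_P0; auto. Qed.

Lemma Pg_Z0 {d} k c g (x : vec d) : pb c = 0 -> pP c = 0%nat -> Zc k x -> Zc k (Pg c g x).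
Proof. intros Hb HP Z. unfold Pg. apply Zc_sub. apply Zc_sub; auto.
  - destruct k. apply Zc_zero_coef. rewrite Z by lia. rewrite Hb; unfold Rdiv; ring.
    apply Zc_scale, Zc_e; lia.
  - apply Zc_scale. apply (Zc_mono 0); [lia|]. apply pv_P0; auto. Qed.

Lemma sum_idx_lv {n} (F : idx n -> R) : sum_idx n F = sumR n (lv F).
Proof. unfold sum_idx, lv. apply sumR_ext; intros. destruct lt_dec; auto. Qed.

Lemma sum_idx_nat {n} (F : idx n -> R) (F' : nat -> R) :
  (forall i : idx n, F i = F' (proj1_sig i)) -> sum_idx n F = sumR n F'.
Proof. intros H. rewrite sum_idx_lv. apply sumR_ext; intros. unfold lv. destruct lt_dec; [|lia].
  rewrite H. auto. Qed.

Lemma sum_idx_le {n} (F G : idx n -> R) : (forall i, F i <= G i) -> sum_idx n F <= sum_idx n G.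
Proof. intros H. rewrite !sum_idx_lv. apply sumR_le; intros. unfold lv; destruct lt_dec; auto; lra. Qed.

Lemma sum_idx_add {n} (F G : idx n -> R) : sum_idx n (fun i => F i + G i) = sum_idx n F + sum_idx n G.
Proof. rewrite !sum_idx_lv, <- sumR_add. apply sumR_ext; intros. unfold lv; destruct lt_dec; ring. Qed.

Lemma sum_idx_scal {n} a (F : idx n -> R) : sum_idx n (fun i => a * F i) = a * sum_idx n F.
Proof. rewrite !sum_idx_lv, <- sumR_scal. apply sumR_ext; intros. unfold lv; destruct lt_dec; ring. Qed.

Lemma sum_idx_scalr {n} a (F : idx n -> R) : sum_idx n (fun i => F i * a) = sum_idx n F * a.
Proof. rewrite Rmult_comm, <- sum_idx_scal. unfold sum_idx. apply sumR_ext; intros. destruct lt_dec; ring. Qed.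

Lemma expect_mono {n} (p : idx n -> R) t (g1 g2 : list (idx n) -> R) :
  (forall j, 0 <= p j) -> (forall s, g1 s <= g2 s) -> expect p t g1 <= expect p t g2.
Proof. revert g1 g2. induction t; intros g1 g2 Hp H; simpl; auto.
  apply IHt; auto. intros s. apply sum_idx_le. intros j. apply Rmult_le_compat_l; auto. Qed.

Lemma expect_affine {n} (p : idx n -> R) t (g : list (idx n) -> R) a b :
  sum_idx n p = 1 -> expect p t (fun s => a + b * g s) = a + b * expect p t g.
Proof. revert g. induction t; intros g Hp; simpl; auto.
  rewrite <- IHt by auto. f_equal. apply functional_extensionality; intros s.
  rewrite <- sum_idx_scal.
  transitivity (sum_idx n (fun j => p j * a + b * (p j * g (j :: s)))).
  { unfold sum_idx. apply sumR_ext; intros. destruct lt_dec; ring. }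
  rewrite sum_idx_add, sum_idx_scalr, Hp. ring. Qed.

Fixpoint cntN {n} (Nf : idx n -> nat) (s : list (idx n)) : nat :=
  match s with [] => 0%nat | j :: s' => (Nf j + cntN Nf s')%nat end.

Lemma expect_N {n} (p : idx n -> R) t (Nf : idx n -> nat) :
  sum_idx n p = 1 ->
  expect p t (fun s => INR (cntN Nf s)) = INR t * sum_idx n (fun j => p j * INR (Nf j)).
Proof. intros Hp. induction t. simpl; ring.
  simpl expect.
  replace (fun s => sum_idx n (fun j => p j * INR (Nf j + cntN Nf s)%nat)) with
    (fun s => sum_idx n (fun j => p j * INR (Nf j)) + 1 * INR (cntN Nf s)).
  2:{ apply functional_extensionality; intros s. simpl cntN. symmetry.
      transitivity (sum_idx n (fun j => p j * INR (Nf j) + p j * INR (cntN Nf s))).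
      { unfold sum_idx. apply sumR_ext; intros. destruct lt_dec; [|ring]. rewrite plus_INR. ring. }
      rewrite sum_idx_add, sum_idx_scalr, Hp. ring. }
  rewrite (expect_affine p t (fun s => INR (cntN Nf s))), IHt by auto. rewrite S_INR. ring. Qed.

Lemma span_Z {d} (x0 : vec d) k (l : list (vec d)) v :
  in_span l v -> (forall w, In w l -> Zc k (Hh x0 w)) -> Zc k (Hh x0 v).
Proof. intros [c Hc] H j Hj.
  assert (Ev : v = vsum (length l) (fun m => vscale (c m) (nth m l vzero))).
  { apply functional_extensionality; intros i. rewrite Hc. reflexivity. }
  rewrite Ev, Hh_vsum. apply sumR_allzero; intros m Hm. rewrite H. ring.
  apply nth_In; auto. auto. Qed.

Lemma hist_inv {n d} (A : pifo n d) (f : idx n -> vec d -> R) (G : idx n -> vec d -> vec d)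
  (P : idx n -> R -> vec d -> vec d) (Zs : nat -> vec d -> Prop) (Nf : idx n -> nat) :
  valid_pifo A ->
  (forall k k' v, (k <= k')%nat -> Zs k v -> Zs k' v) ->
  (forall k l v, in_span l v -> (forall w, In w l -> Zs k w) -> Zs k v) ->
  Zs 0%nat (x_init A) ->
  (forall i k x g, Zs k x -> Zs (Nf i + k)%nat (G i x) /\ Zs (Nf i + k)%nat (P i g x)) ->
  forall s, let h := history A f G P s in
    (forall w, In w (prev_points A h ++ map o_grad h ++ map o_prox h) -> Zs (cntN Nf s) w) /\
    Zs (cntN Nf s) (cur A h).
Proof. intros HA Hmono Hspan H0 Hstep s. induction s as [|i s IH]; simpl.
  - split; auto. intros w [].
  - destruct IH as [IH1 IH2].
    set (h' := history A f G P s) in *.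
    set (x := cur A h') in *.
    destruct (Hstep i (cntN Nf s) x (gam A (S (length s))) IH2) as [HG HP].
    assert (L1 : forall w, In w (prev_points A h' ++ map o_grad h' ++ map o_prox h') -> Zs (Nf i + cntN Nf s)%nat w).
    { intros w Hw. apply Hmono with (cntN Nf s); [lia|]. auto. }
    assert (L2 : forall w, In w (x :: prev_points A h' ++ G i x :: map o_grad h' ++ P i (gam A (S (length s))) x :: map o_prox h')
       -> Zs (Nf i + cntN Nf s)%nat w).
    { intros w Hw. simpl in Hw. destruct Hw as [<-|Hw]. apply Hmono with (cntN Nf s); [lia|]. auto.
      apply in_app_iff in Hw. destruct Hw as [Hw|Hw]. apply L1, in_app_iff; auto.
      simpl in Hw. destruct Hw as [<-|Hw]. auto.
      apply in_app_iff in Hw. destruct Hw as [Hw|Hw]. apply L1, in_app_iff; right; apply in_app_iff; auto.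
      simpl in Hw. destruct Hw as [<-|Hw]. auto. apply L1, in_app_iff; right; apply in_app_iff; auto. }
    split; auto.
    destruct HA as (_ & _ & _ & Hnext).
    eapply Hspan. apply Hnext. discriminate. simpl. auto. Qed.

Definition cpi {n} (k1 k2 : nat) (cA cB cU : cpar) (i : idx n) : cpar :=
  if Nat.eq_dec (proj1_sig i) k1 then cA else if Nat.eq_dec (proj1_sig i) k2 then cB else cU.
Definition Nfi {n} (k1 k2 : nat) (i : idx n) : nat :=
  if Nat.eq_dec (proj1_sig i) k1 then 1%nat else if Nat.eq_dec (proj1_sig i) k2 then 1%nat else 0%nat.

Lemma sumR_const m a : sumR m (fun _ => a) = INR m * a.
Proof. induction m; simpl sumR; [simpl; ring|]. rewrite IHm, S_INR. ring. Qed.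

Lemma sumR_ind m k (a : R) : (k < m)%nat -> sumR m (fun j => if Nat.eq_dec j k then a else 0) = a.
Proof. intros. rewrite (sumR_unique _ _ k); auto. destruct Nat.eq_dec; auto; lia.
  intros. destruct Nat.eq_dec; auto; lia. Qed.

Lemma sumR_three m k1 k2 a b c : (k1 < m)%nat -> (k2 < m)%nat -> k1 <> k2 ->
  sumR m (fun j => if Nat.eq_dec j k1 then a else if Nat.eq_dec j k2 then b else c)
  = a + b + (INR m - 2) * c.
Proof. intros H1 H2 H12.
  transitivity (sumR m (fun j => c + ((if Nat.eq_dec j k1 then (a - c) else 0) + (if Nat.eq_dec j k2 then (b - c) else 0)))).
  { apply sumR_ext; intros. repeat destruct Nat.eq_dec; subst; try lia; ring. }
  rewrite !sumR_add, sumR_const, !sumR_ind by auto. ring. Qed.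

Lemma favg_eq {n d} (x0 : vec d) k1 k2 cA cB cU x : (k1 < n)%nat -> (k2 < n)%nat -> k1 <> k2 ->
  favg (fun i : idx n => fF x0 (cpi k1 k2 cA cB cU i)) x =
  (fF x0 cA x + fF x0 cB x + (INR n - 2) * fF x0 cU x) / INR n.
Proof. intros. unfold favg. f_equal.
  rewrite (sum_idx_nat _ (fun j => if Nat.eq_dec j k1 then fF x0 cA x else if Nat.eq_dec j k2 then fF x0 cB x else fF x0 cU x)).
  apply sumR_three; auto.
  intros i. unfold cpi. repeat destruct Nat.eq_dec; auto. Qed.

Lemma lv_idx {n} (p : idx n -> R) (i : idx n) : lv p (proj1_sig i) = p i.
Proof. destruct i as [j Hj]. unfold lv. simpl. destruct lt_dec; [|lia]. rewrite (proof_irrelevance _ Hj l). auto. Qed.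

Lemma q_eq {n} (p : idx n -> R) k1 k2 : (k1 < n)%nat -> (k2 < n)%nat -> k1 <> k2 ->
  sum_idx n (fun j => p j * INR (Nfi k1 k2 j)) = lv p k1 + lv p k2.
Proof. intros. rewrite (sum_idx_nat _ (fun j => (if Nat.eq_dec j k1 then lv p k1 else 0) + (if Nat.eq_dec j k2 then lv p k2 else 0))).
  rewrite sumR_add, !sumR_ind; auto.
  intros i. rewrite <- (lv_idx p i). destruct i as [j Hj]. unfold Nfi. simpl.
  repeat destruct Nat.eq_dec; subst; try lia; simpl; ring. Qed.

Lemma fF_nonneg {d} (x0 : vec d) L c x : goodc L d c -> 0 <= fF x0 c x.
Proof. intros (Hu & Hw & _). unfold fF, gq.
  assert (0 <= sumR (pP c) (fun i => dl c (Hh x0 x) i ^ 2)) by (apply sumR_nonneg; intros; nra).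
  assert (0 <= (pb c - lv (Hh x0 x) 1) ^ 2) by apply pow2_ge_0.
  apply Rplus_le_le_0_compat; apply Rmult_le_pos; auto; lra. Qed.

Lemma assemble {n d} (A : pifo n d) L k1 k2 cA cB cU (alpha beta : R) :
  valid_pifo A -> 0 < L -> (k1 < n)%nat -> (k2 < n)%nat -> k1 <> k2 -> (1 <= d)%nat ->
  goodc L d cA -> goodc L d cB -> goodc L d cU -> pb cU = 0 -> pP cU = 0%nat ->
  (forall k x, Zc k (Hh (x_init A) x) ->
     alpha + beta * INR k <= favg (fun i : idx n => fF (x_init A) (cpi k1 k2 cA cB cU i)) x) ->
  let f := fun i : idx n => fF (x_init A) (cpi k1 k2 cA cB cU i) in
  let G := fun i : idx n => GF (x_init A) (cpi k1 k2 cA cB cU i) in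
  let P := fun (i : idx n) g => PF (x_init A) (cpi k1 k2 cA cB cU i) g in
  (forall i, L_smooth L (f i) (G i) /\ convex (f i)) /\
  (forall i gamma x, 0 < gamma -> is_prox (f i) gamma x (P i gamma x)) /\
  (forall t, alpha + beta * INR t * (lv (prob A) k1 + lv (prob A) k2) <=
     expect (prob A) t (fun s => favg f (cur A (history A f G P s)))).
Proof. intros HA HL H1 H2 H12 Hd HcA HcB HcU HbU HPU Hlow f G P.
  assert (Hgood : forall i : idx n, goodc L d (cpi k1 k2 cA cB cU i)).
  { intros i; unfold cpi; repeat destruct Nat.eq_dec; auto. }
  split; [|split].
  - intros i. split. apply F_smooth; auto. eapply F_convex; eauto.
  - intros i g x Hg. apply F_prox with L; auto.
  - intros t. set (x0 := x_init A) in *.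
    assert (Hinv := hist_inv A f G P (fun k v => Zc k (Hh x0 v)) (Nfi k1 k2) HA).
    destruct HA as (Hp0 & Hp1 & _).
    assert (Hstep : forall (i : idx n) k x g, Zc k (Hh x0 x) ->
       Zc (Nfi k1 k2 i + k)%nat (Hh x0 (G i x)) /\ Zc (Nfi k1 k2 i + k)%nat (Hh x0 (P i g x))).
    { intros i k x g Hx. unfold G, P, GF, PF. rewrite !Hh_invol. unfold Nfi, cpi.
      destruct Nat.eq_dec; [|destruct Nat.eq_dec].
      - split; [apply gg_Z | apply Pg_Z]; auto.
      - split; [apply gg_Z | apply Pg_Z]; auto.
      - split; [apply gg_Z0 | apply Pg_Z0]; auto. }
    assert (Hs : forall s, alpha + beta * INR (cntN (Nfi k1 k2) s) <= favg f (cur A (history A f G P s))).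
    { intros s. apply Hlow. apply (proj2 (Hinv ltac:(intros; eapply Zc_mono; eauto)
        ltac:(intros; eapply span_Z; eauto)
        ltac:(unfold x0; rewrite Hh_x0 by auto; apply Zc_scale, Zc_e; lia)
        Hstep s)). }
    eapply Rle_trans. 2:{ apply expect_mono; [apply Hp0| exact Hs]. }
    rewrite expect_affine, expect_N, q_eq by auto. right; ring. Qed.

Lemma telesc (z : nat -> R) K : (1 <= K)%nat ->
  (z 0%nat - z K)^2 / INR K <= sumR K (fun j => (z j - z (S j))^2).
Proof. induction K; intros HK; [lia|]. destruct (Nat.eq_dec K 0).
  - subst. simpl. lra.
  - specialize (IHK ltac:(lia)). cbn [sumR].
    assert (HK0 : 0 < INR K) by (apply lt_0_INR; lia).
    rewrite S_INR.
    set (a := z 0%nat - z K). set (c := z K - z (S K)).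
    replace (z 0%nat - z (S K)) with (a + c) by (unfold a, c; ring).
    fold a in IHK. fold c.
    assert ((a + c)^2 / (INR K + 1) <= a^2 / INR K + c^2).
    { assert (E : a^2 / INR K + c^2 - (a + c)^2 / (INR K + 1) = (a - INR K * c)^2 / (INR K * (INR K + 1)))
        by (field; lra).
      assert (0 <= (a - INR K * c)^2 / (INR K * (INR K + 1))).
      { unfold Rdiv. apply Rmult_le_pos. apply pow2_ge_0. apply Rlt_le, Rinv_0_lt_compat. nra. }
      lra. }
    lra. Qed.

Lemma sumR_gt m (G : nat -> R) c : (forall k, (k < m)%nat -> c <= G k) ->
  (exists k, (k < m)%nat /\ c < G k) -> INR m * c < sumR m G.
Proof. induction m; intros H [k [Hk Hc]]; [lia|]. cbn [sumR]. rewrite S_INR.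
  destruct (Nat.eq_dec k m).
  - subst. assert (INR m * c <= sumR m G).
    { rewrite <- sumR_const. apply sumR_le; intros; apply H; lia. }
    lra.
  - assert (INR m * c < sumR m G) by (apply IHm; [intros; apply H; lia| exists k; split; auto; lia]).
    pose proof (H m ltac:(lia)). lra. Qed.

Lemma pick2 n (F : nat -> R) : (2 <= n)%nat -> (forall k, 0 <= F k) -> sumR n F = 1 ->
  exists k1 k2, (k1 < n)%nat /\ (k2 < n)%nat /\ k1 <> k2 /\ F k1 + F k2 <= 3 / INR n.
Proof. intros Hn HF Hs. assert (Hn0 : 0 < INR n) by (apply lt_0_INR; lia).
  assert (Hk1 : exists k1, (k1 < n)%nat /\ F k1 <= 1 / INR n).
  { apply NNPP; intros Hno.
    assert (INR n * (1 / INR n) < sumR n F).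
    { apply sumR_gt. intros k Hk. destruct (Rle_dec (F k) (1 / INR n)); [|lra].
      exfalso; apply Hno; exists k; auto.
      exists 0%nat. split; [lia|]. destruct (Rle_dec (F 0%nat) (1 / INR n)); [|lra].
      exfalso; apply Hno; exists 0%nat; split; auto; lia. }
    replace (INR n * (1 / INR n)) with 1 in H by (field; lra). lra. }
  destruct Hk1 as [k1 [Hk1 Hf1]].
  assert (Hk2 : exists k2, (k2 < n)%nat /\ k2 <> k1 /\ F k2 <= 2 / INR n).
  { apply NNPP; intros Hno.
    set (G := fun k => F k + (if Nat.eq_dec k k1 then 2 / INR n else 0)).
    assert (INR n * (2 / INR n) < sumR n G).
    { apply sumR_gt.
      - intros k Hk. unfold G. destruct Nat.eq_dec. pose proof (HF k); lra.
        destruct (Rle_dec (F k) (2 / INR n)); [|lra]. exfalso; apply Hno; exists k; auto.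
      - set (k := if Nat.eq_dec k1 0 then 1%nat else 0%nat). exists k.
        assert (Hkk : (k < n /\ k <> k1)%nat) by (unfold k; destruct Nat.eq_dec; lia).
        clearbody k. destruct Hkk as [Hkn Hkk].
        split; [exact Hkn|]. unfold G. destruct Nat.eq_dec; [lia|].
        destruct (Rle_dec (F k) (2 / INR n)); [|lra]. exfalso; apply Hno; exists k; split; [lia|split; auto]. }
    unfold G in H. rewrite sumR_add, sumR_ind, Hs in H by auto.
    replace (INR n * (2 / INR n)) with 2 in H by (field; lra).
    assert (2 / INR n <= 1). { apply Rmult_le_reg_r with (INR n); auto. unfold Rdiv.
      rewrite Rmult_assoc, Rinv_l by lra. assert (2 <= INR n). { replace 2 with (INR 2) by (simpl; ring). apply le_INR; auto. } lra. }
    lra. }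
  destruct Hk2 as [k2 [Hk2 [Hne Hf2]]]. exists k1, k2. repeat split; auto.
  replace (3 / INR n) with (1 / INR n + 2 / INR n) by (field; lra). lra. Qed.

Definition ys (d : nat) (nx bst : R) : vec d := fun i => if Nat.eq_dec (proj1_sig i) 0 then nx else bst.

Lemma lv_ys0 d nx bst : (1 <= d)%nat -> lv (ys d nx bst) 0 = nx.
Proof. intros. unfold lv, ys. destruct (lt_dec 0 d); [|lia]. simpl. reflexivity. Qed.
Lemma lv_ys d nx bst j : (1 <= j)%nat -> (j < d)%nat -> lv (ys d nx bst) j = bst.
Proof. intros. unfold lv, ys. destruct (lt_dec j d); [|lia]. simpl. destruct Nat.eq_dec; auto; lia. Qed.

Lemma dist_ys {d} (x0 : vec d) bst : (1 <= d)%nat ->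
  norm2 (vsub x0 (Hh x0 (ys d (norm2 x0) bst))) = sqrt (INR (d - 1) * bst ^ 2).
Proof. intros Hd. rewrite norm2_Hh_l, Hh_x0 by auto. unfold norm2. f_equal.
  rewrite inner_lv. replace d with (1 + (d - 1))%nat at 1 by lia. rewrite sumR_split.
  simpl sumR. rewrite lv_sub, lv_scale, lv_e_same, lv_ys0 by lia.
  rewrite <- sumR_const. match goal with |- ?a + ?s = ?t => replace a with 0 by ring end.
  rewrite Rplus_0_l. apply sumR_ext; intros. rewrite lv_sub, lv_scale, lv_e_diff, lv_ys by lia. ring. Qed.

Lemma Rdiv_le_0_compat a b : 0 <= a -> 0 < b -> 0 <= a / b.
Proof. intros. unfold Rdiv. apply Rmult_le_pos; auto. apply Rlt_le, Rinv_0_lt_compat; auto. Qed.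

Definition zeta {d} (b : R) (z : vec d) (j : nat) : R := match j with O => b | S _ => lv z j end.

Lemma chain_sum {d} L b P (z : vec d) :
  gq (mkC (L/2) b (L/2) 2 P) z + gq (mkC 0 0 (L/2) 1 P) z =
  L/4 * sumR (2*P+1) (fun j => (zeta b z j - zeta b z (S j))^2).
Proof. replace (2*P+1)%nat with (1 + 2*P)%nat by lia. rewrite sumR_split.
  rewrite <- (pair_sum P (fun j => (zeta b z (1 + j) - zeta b z (S (1 + j))) ^ 2)).
  unfold gq, dl. cbn [ps pu0 pb pw pP sumR].
  assert (E : forall i, (zeta b z (1 + 2 * i) - zeta b z (S (1 + 2 * i))) ^ 2 +
      (zeta b z (1 + (2 * i + 1)) - zeta b z (S (1 + (2 * i + 1)))) ^ 2 =
      (lv z (1 + 2 * i) - lv z (1 + 2 * i + 1)) ^ 2 + (lv z (2 + 2 * i) - lv z (2 + 2 * i + 1)) ^ 2).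
  { intros i. replace (1 + 2*i)%nat with (S (2*i)) by lia.
    replace (1 + (2*i+1))%nat with (S (S (2*i))) by lia.
    replace (S (2*i) + 1)%nat with (S (S (2*i))) by lia.
    replace (2 + 2*i)%nat with (S (S (2*i))) by lia.
    replace (S (S (2*i)) + 1)%nat with (S (S (S (2*i)))) by lia. reflexivity. }
  rewrite (sumR_ext _ _ _ (fun i _ => E i)), sumR_add.
  simpl zeta. field. Qed.

Lemma prob_facts {n d} (A : pifo n d) : valid_pifo A ->
  (forall k, 0 <= lv (prob A) k) /\ sumR n (lv (prob A)) = 1.
Proof. intros (H0 & H1 & _). split. intros k. unfold lv. destruct lt_dec; auto; lra.
  rewrite <- sum_idx_lv. auto. Qed.

Lemma chain_case n L B eps (A : forall d, pifo n d) (P : nat) :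
  (2 <= n)%nat -> 0 < L -> 0 < B -> 0 < eps -> (forall d, valid_pifo (A d)) ->
  eps <= L * B^2 / (8 * INR n * INR (2*P+1) ^ 2) ->
  exists (f : idx n -> vec (2*P+2) -> R) (G : idx n -> vec (2*P+2) -> vec (2*P+2))
         (Pp : idx n -> R -> vec (2*P+2) -> vec (2*P+2)) (xstar : vec (2*P+2)),
    (forall i, L_smooth L (f i) (G i) /\ convex (f i)) /\
    (forall i gamma x, 0 < gamma -> is_prox (f i) gamma x (Pp i gamma x)) /\
    (forall y, favg f xstar <= favg f y) /\
    norm2 (vsub (x_init (A (2*P+2)%nat)) xstar) <= B /\
    forall t : nat, INR t * 6 <= INR n * INR (2*P+1) ->
      expect (prob (A (2*P+2)%nat)) t
        (fun s => favg f (cur (A (2*P+2)%nat) (history (A (2*P+2)%nat) f G Pp s))) - favg f xstar >= eps.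
Proof. intros Hn HL HB He HA Heps.
  set (d := (2*P+2)%nat). set (Ad := A d). set (x0 := x_init Ad).
  destruct (prob_facts Ad (HA d)) as [Hp0 Hp1].
  destruct (pick2 n (lv (prob Ad)) Hn Hp0 Hp1) as (k1 & k2 & Hk1 & Hk2 & Hk12 & Hq).
  set (m := INR (2*P+1)). assert (Hm : 0 < m) by (apply lt_0_INR; lia).
  assert (Hn0 : 0 < INR n) by (apply lt_0_INR; lia).
  set (b := B / sqrt m).
  assert (Hb2 : b^2 = B^2 / m).
  { unfold b. unfold Rdiv. rewrite Rpow_mult_distr, pow_inv, pow2_sqrt by lra. auto. }
  set (cA := mkC (L/2) b (L/2) 2 P). set (cB := mkC 0 0 (L/2) 1 P). set (cU := mkC 0 0 0 1 0).
  assert (HcA : goodc L d cA) by (unfold goodc, cA, d; simpl; repeat split; try lra; try lia; right; lia).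
  assert (HcB : goodc L d cB) by (unfold goodc, cB, d; simpl; repeat split; try lra; try lia; left; lra).
  assert (HcU : goodc L d cU) by (unfold goodc, cU, d; simpl; repeat split; try lra; try lia; left; lra).
  assert (HLB : 0 < L * B^2) by (apply Rmult_lt_0_compat; [lra| apply pow_lt; lra]).
  assert (HB2 : 0 < B^2) by (apply pow_lt; lra).
  set (alpha := L * B^2 / (4 * INR n * m^2)).
  assert (Halpha : 2 * eps <= alpha).
  { unfold alpha. replace (L * B ^ 2 / (4 * INR n * m ^ 2)) with (2 * (L * B ^ 2 / (8 * INR n * m ^ 2))) by (field; lra).
    fold m in Heps. lra. }
  assert (HfU : forall x, fF x0 cU x = 0) by (intros; unfold fF, gq, cU; cbn [pu0 pw pP pb sumR]; field).
  assert (Hfav : forall x, favg (fun i : idx n => fF x0 (cpi k1 k2 cA cB cU i)) x =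
     (fF x0 cA x + fF x0 cB x) / INR n).
  { intros x. rewrite favg_eq by auto. rewrite HfU. f_equal; ring. }
  assert (Hnn : forall x, 0 <= favg (fun i : idx n => fF x0 (cpi k1 k2 cA cB cU i)) x).
  { intros x. rewrite Hfav. apply Rdiv_le_0_compat; auto.
    pose proof (fF_nonneg x0 L cA x HcA). pose proof (fF_nonneg x0 L cB x HcB). lra. }
  assert (Hlow : forall k x, Zc k (Hh x0 x) ->
     alpha + (- alpha / m) * INR k <= favg (fun i : idx n => fF x0 (cpi k1 k2 cA cB cU i)) x).
  { intros k x Hz. destruct (le_lt_dec (2*P+1) k) as [Hk|Hk].
    - apply Rle_trans with 0; [|apply Hnn].
      assert (m <= INR k) by (apply le_INR; auto).
      assert (0 < alpha) by lra.
      replace (alpha + - alpha / m * INR k) with (alpha * (m - INR k) / m) by (field; lra).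
      assert (alpha * (m - INR k) <= 0) by nra.
      unfold Rdiv. assert (0 < / m) by (apply Rinv_0_lt_compat; lra). nra.
    - rewrite Hfav. unfold fF. unfold cA, cB. rewrite chain_sum.
      set (z := Hh x0 x) in *.
      assert (T : b^2 / INR (S k) <= sumR (2*P+1) (fun j => (zeta b z j - zeta b z (S j))^2)).
      { apply Rle_trans with (sumR (S k) (fun j => (zeta b z j - zeta b z (S j))^2)).
        - pose proof (telesc (zeta b z) (S k) ltac:(lia)) as Tl. simpl zeta at 1 in Tl.
          unfold zeta at 1 in Tl. rewrite (Hz (S k)) in Tl by lia. rewrite Rminus_0_r in Tl. exact Tl.
        - apply sumR_mono_len. lia. intros; apply pow2_ge_0. }
      assert (Hk1m : INR (S k) <= m) by (apply le_INR; lia).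
      assert (HSk : 0 < INR (S k)) by (apply lt_0_INR; lia).
      assert (0 <= INR k) by apply pos_INR.
      assert (alpha + - alpha / m * INR k <= alpha).
      { assert (0 <= alpha / m * INR k). apply Rmult_le_pos; [apply Rdiv_le_0_compat|]; lra. lra. }
      assert (alpha <= L / 4 * (b^2 / INR (S k)) / INR n).
      { rewrite Hb2. unfold alpha. apply Rmult_le_reg_r with (4 * INR n * m * m * INR (S k) / (L * B^2)).
        apply Rdiv_lt_0_compat; [|lra]. repeat apply Rmult_lt_0_compat; lra.
        replace (L * B ^ 2 / (4 * INR n * m ^ 2) * (4 * INR n * m * m * INR (S k) / (L * B ^ 2))) with (INR (S k))
          by (field; repeat split; lra).
        replace (L / 4 * (B ^ 2 / m / INR (S k)) / INR n * (4 * INR n * m * m * INR (S k) / (L * B ^ 2))) with m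
          by (field; repeat split; lra). lra. }
      assert (L / 4 * (b^2 / INR (S k)) / INR n <= L / 4 * sumR (2 * P + 1) (fun j => (zeta b z j - zeta b z (S j)) ^ 2) / INR n).
      { apply Rmult_le_compat_r. apply Rlt_le, Rinv_0_lt_compat; lra. apply Rmult_le_compat_l; lra. }
      lra. }
  destruct (assemble Ad L k1 k2 cA cB cU alpha (- alpha / m) (HA d) HL Hk1 Hk2 Hk12 ltac:(unfold d; lia)
     HcA HcB HcU eq_refl eq_refl Hlow) as (R1 & R2 & R3).
  exists (fun i : idx n => fF x0 (cpi k1 k2 cA cB cU i)), (fun i : idx n => GF x0 (cpi k1 k2 cA cB cU i)),
    (fun (i : idx n) g => PF x0 (cpi k1 k2 cA cB cU i) g), (Hh x0 (ys d (norm2 x0) b)).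
  assert (Hstar : favg (fun i : idx n => fF x0 (cpi k1 k2 cA cB cU i)) (Hh x0 (ys d (norm2 x0) b)) = 0).
  { rewrite Hfav. unfold fF. rewrite Hh_invol. unfold gq, cA, cB; cbn [ps pu0 pb pw pP].
    rewrite lv_ys by (unfold d; lia).
    rewrite !sumR_allzero. unfold Rdiv; ring.
    - intros i Hi. unfold dl; cbn [ps]. rewrite !lv_ys by (unfold d; lia). ring.
    - intros i Hi. unfold dl; cbn [ps]. rewrite !lv_ys by (unfold d; lia). ring. }
  split; [exact R1|]. split; [exact R2|]. split.
  { intros y. rewrite Hstar. apply Hnn. }
  split.
  { fold Ad. fold x0. rewrite dist_ys by (unfold d; lia).
    replace (d - 1)%nat with (2*P+1)%nat by (unfold d; lia). fold m. rewrite Hb2.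
    replace (m * (B ^ 2 / m)) with (B^2) by (field; lra). rewrite sqrt_pow2; lra. }
  intros t Ht. rewrite Hstar. specialize (R3 t). fold Ad.
  assert (Hq' : lv (prob Ad) k1 + lv (prob Ad) k2 <= 3 / INR n) by exact Hq.
  assert (0 <= lv (prob Ad) k1 + lv (prob Ad) k2) by (pose proof (Hp0 k1); pose proof (Hp0 k2); lra).
  assert (0 <= INR t) by apply pos_INR.
  assert (INR t * (lv (prob Ad) k1 + lv (prob Ad) k2) <= m / 2).
  { apply Rle_trans with (INR t * (3 / INR n)). apply Rmult_le_compat_l; auto.
    apply Rmult_le_reg_r with (INR n); auto. replace (INR t * (3 / INR n) * INR n) with (3 * INR t) by (field; lra).
    fold m in Ht. lra. }
  assert (alpha / m * (INR t * (lv (prob Ad) k1 + lv (prob Ad) k2)) <= alpha / 2).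
  { apply Rle_trans with (alpha / m * (m / 2)). apply Rmult_le_compat_l; auto. apply Rdiv_le_0_compat; lra.
    right; field; lra. }
  replace (alpha + - alpha / m * INR t * (lv (prob Ad) k1 + lv (prob Ad) k2)) with
    (alpha - alpha / m * (INR t * (lv (prob Ad) k1 + lv (prob Ad) k2))) in R3 by (field; lra).
  fold x0 in R3. lra. Qed.

Lemma small_case n L B eps (A : forall d, pifo n d) :
  (2 <= n)%nat -> 0 < L -> 0 < B -> 0 < eps -> (forall d, valid_pifo (A d)) ->
  eps <= L * B^2 / 4 ->
  exists (f : idx n -> vec 2 -> R) (G : idx n -> vec 2 -> vec 2)
         (Pp : idx n -> R -> vec 2 -> vec 2) (xstar : vec 2),
    (forall i, L_smooth L (f i) (G i) /\ convex (f i)) /\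
    (forall i gamma x, 0 < gamma -> is_prox (f i) gamma x (Pp i gamma x)) /\
    (forall y, favg f xstar <= favg f y) /\
    norm2 (vsub (x_init (A 2%nat)) xstar) <= B /\
    forall t : nat, INR t * 6 <= INR n ->
      expect (prob (A 2%nat)) t
        (fun s => favg f (cur (A 2%nat) (history (A 2%nat) f G Pp s))) - favg f xstar >= eps.
Proof. intros Hn HL HB He HA Heps.
  set (d := 2%nat). set (Ad := A d). set (x0 := x_init Ad).
  destruct (prob_facts Ad (HA d)) as [Hp0 Hp1].
  destruct (pick2 n (lv (prob Ad)) Hn Hp0 Hp1) as (k1 & k2 & Hk1 & Hk2 & Hk12 & Hq).
  assert (Hn0 : 0 < INR n) by (apply lt_0_INR; lia).
  assert (HB2 : 0 < B^2) by (apply pow_lt; lra).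
  set (cA := mkC L (INR n * B) 0 2 0). set (cU := mkC L 0 0 2 0).
  assert (HcA : goodc L d cA) by (unfold goodc, cA, d; simpl; repeat split; try lra; try lia; right; lia).
  assert (HcU : goodc L d cU) by (unfold goodc, cU, d; simpl; repeat split; try lra; try lia; right; lia).
  set (fstar := L / 2 * ((INR n - 1) * B^2)).
  assert (Hfav : forall x, favg (fun i : idx n => fF x0 (cpi k1 k2 cA cU cU i)) x =
     L / 2 * ((lv (Hh x0 x) 1 - B)^2 + (INR n - 1) * B^2)).
  { intros x. rewrite favg_eq by auto. unfold fF, gq, cA, cU. cbn [pu0 pb pw pP sumR]. field. lra. }
  assert (Hmin : forall x, fstar <= favg (fun i : idx n => fF x0 (cpi k1 k2 cA cU cU i)) x).
  { intros x. rewrite Hfav. unfold fstar. pose proof (pow2_ge_0 (lv (Hh x0 x) 1 - B)).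
    assert (0 <= L / 2 * (lv (Hh x0 x) 1 - B) ^ 2) by (apply Rmult_le_pos; lra). nra. }
  set (alpha := fstar + L * B^2 / 2).
  assert (Hlow : forall k x, Zc k (Hh x0 x) ->
     alpha + (- (L * B^2 / 2)) * INR k <= favg (fun i : idx n => fF x0 (cpi k1 k2 cA cU cU i)) x).
  { intros k x Hz. destruct k.
    - rewrite Hfav, (Hz 1%nat) by lia. unfold alpha, fstar. simpl INR. right; field.
    - apply Rle_trans with fstar; [|apply Hmin]. unfold alpha.
      assert (1 <= INR (S k)) by (rewrite S_INR; pose proof (pos_INR k); lra).
      assert (L * B^2 / 2 <= L * B ^ 2 / 2 * INR (S k)).
      { rewrite <- (Rmult_1_r (L * B^2 / 2)) at 1. apply Rmult_le_compat_l; auto.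
        apply Rdiv_le_0_compat; [apply Rmult_le_pos|]; lra. }
      lra. }
  destruct (assemble Ad L k1 k2 cA cU cU alpha (- (L * B^2 / 2)) (HA d) HL Hk1 Hk2 Hk12 ltac:(unfold d; lia)
     HcA HcU HcU eq_refl eq_refl Hlow) as (R1 & R2 & R3).
  exists (fun i : idx n => fF x0 (cpi k1 k2 cA cU cU i)), (fun i : idx n => GF x0 (cpi k1 k2 cA cU cU i)),
    (fun (i : idx n) g => PF x0 (cpi k1 k2 cA cU cU i) g), (Hh x0 (ys d (norm2 x0) B)).
  assert (Hstar : favg (fun i : idx n => fF x0 (cpi k1 k2 cA cU cU i)) (Hh x0 (ys d (norm2 x0) B)) = fstar).
  { rewrite Hfav, Hh_invol, lv_ys by (unfold d; lia). unfold fstar. ring. }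
  split; [exact R1|]. split; [exact R2|]. split.
  { intros y. rewrite Hstar. apply Hmin. }
  split.
  { fold Ad. fold x0. rewrite dist_ys by (unfold d; lia). simpl INR.
    rewrite Rmult_1_l, sqrt_pow2; lra. }
  intros t Ht. rewrite Hstar. specialize (R3 t). fold Ad. fold x0 in R3.
  assert (0 <= lv (prob Ad) k1 + lv (prob Ad) k2) by (pose proof (Hp0 k1); pose proof (Hp0 k2); lra).
  assert (0 <= INR t) by apply pos_INR.
  assert (INR t * (lv (prob Ad) k1 + lv (prob Ad) k2) <= 1 / 2).
  { apply Rle_trans with (INR t * (3 / INR n)). apply Rmult_le_compat_l; auto.
    apply Rmult_le_reg_r with (INR n); auto. replace (INR t * (3 / INR n) * INR n) with (3 * INR t) by (field; lra).
    lra. }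
  assert (L * B^2 / 2 * (INR t * (lv (prob Ad) k1 + lv (prob Ad) k2)) <= L * B^2 / 2 * (1/2)).
  { apply Rmult_le_compat_l; auto. apply Rdiv_le_0_compat; [apply Rmult_le_pos|]; lra. }
  unfold alpha in R3. lra. Qed.

Lemma floor_nat (x : R) : 0 <= x -> exists N : nat, INR N <= x < INR N + 1.
Proof. intros Hx. destruct (archimed x) as [H1 H2].
  assert (Hz : (0 < up x)%Z) by (apply lt_0_IZR; lra).
  exists (Z.to_nat (up x - 1)). rewrite INR_IZR_INZ, Z2Nat.id by lia.
  rewrite minus_IZR. simpl. lra. Qed.

Lemma sq_le_nonneg a b : 0 <= a -> 0 <= b -> a^2 <= b^2 -> a <= b.
Proof. intros. destruct (Rle_dec a b); auto. nra. Qed.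

Theorem theorem3p2 :
  exists c C : R, 0 < c /\ 0 < C /\
  forall (n : nat) (L B eps : R),
    (2 <= n)%nat -> 0 < L -> 0 < B -> 0 < eps -> eps <= L * B ^ 2 / 4 ->
    forall A : forall d : nat, pifo n d,
      (forall d, valid_pifo (A d)) ->
      exists (d : nat) (f : idx n -> vec d -> R) (G : idx n -> vec d -> vec d)
             (P : idx n -> R -> vec d -> vec d) (xstar : vec d),
        INR d <= C * (1 + B * sqrt (L / (INR n * eps))) /\
        (forall i, L_smooth L (f i) (G i) /\ convex (f i)) /\
        (forall i gamma x, 0 < gamma -> is_prox (f i) gamma x (P i gamma x)) /\
        (forall y, favg f xstar <= favg f y) /\
        norm2 (vsub (x_init (A d)) xstar) <= B /\
        forall t : nat,
          INR t <= c * (INR n + B * sqrt (INR n * L / eps)) ->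
          expect (prob (A d)) t
            (fun s => favg f (cur (A d) (history (A d) f G P s)))
          - favg f xstar >= eps.
Proof.
  exists (1/72), 2. split; [lra|]. split; [lra|].
  intros n L B eps Hn HL HB He Heps A HA.
  assert (Hn0 : 0 < INR n) by (apply lt_0_INR; lia).
  set (K := L * B^2 / (8 * INR n * eps)).
  assert (HK : 0 < K). { unfold K. apply Rdiv_lt_0_compat. apply Rmult_lt_0_compat; [lra| apply pow_lt; lra].
    repeat apply Rmult_lt_0_compat; lra. }
  set (r := sqrt K). assert (Hr2 : r^2 = K) by (unfold r; apply pow2_sqrt; lra).
  assert (Hr0 : 0 <= r) by apply sqrt_pos.
  set (S := B * sqrt (INR n * L / eps)).
  set (D := B * sqrt (L / (INR n * eps))).
  assert (HS0 : 0 <= S) by (unfold S; apply Rmult_le_pos; [lra| apply sqrt_pos]).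
  assert (HD0 : 0 <= D) by (unfold D; apply Rmult_le_pos; [lra| apply sqrt_pos]).
  assert (HS2 : S^2 = 8 * INR n ^ 2 * r^2).
  { unfold S. rewrite Rpow_mult_distr, pow2_sqrt. rewrite Hr2. unfold K. field. lra.
    apply Rlt_le, Rdiv_lt_0_compat; [apply Rmult_lt_0_compat|]; lra. }
  assert (HD2 : D^2 = 8 * r^2).
  { unfold D. rewrite Rpow_mult_distr, pow2_sqrt. rewrite Hr2. unfold K. field. lra.
    apply Rlt_le, Rdiv_lt_0_compat; [|apply Rmult_lt_0_compat]; lra. }
  assert (HSr : S <= 3 * INR n * r).
  { apply sq_le_nonneg; auto. apply Rmult_le_pos; lra. rewrite HS2.
    replace ((3 * INR n * r) ^ 2) with (9 * INR n ^ 2 * r ^ 2) by ring.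
    assert (0 <= INR n ^ 2 * r^2) by (apply Rmult_le_pos; apply pow2_ge_0). lra. }
  assert (HDr : r <= D).
  { apply sq_le_nonneg; auto. rewrite HD2. pose proof (pow2_ge_0 r). lra. }
  fold S D.
  destruct (Rle_dec 3 r) as [Hr3|Hr3].
  -
    destruct (floor_nat ((r - 1) / 2) ltac:(apply Rdiv_le_0_compat; lra)) as [N [HN1 HN2]].
    set (m := INR (2*N+1)).
    assert (Hm : m = 2 * INR N + 1) by (unfold m; rewrite plus_INR, mult_INR; simpl; ring).
    assert (Hmr : m <= r) by lra. assert (Hmr3 : r / 3 <= m) by lra.
    assert (Hm0 : 0 < m) by (pose proof (pos_INR N); lra).
    assert (Heps' : eps <= L * B^2 / (8 * INR n * INR (2*N+1) ^ 2)).
    { fold m. assert (m^2 <= K) by (rewrite <- Hr2; apply pow_incr; lra).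
      unfold K in H.
      assert (Hc : 0 < 8 * INR n * eps) by (repeat apply Rmult_lt_0_compat; lra).
      assert (H' : m^2 * (8 * INR n * eps) <= L * B^2).
      { apply Rmult_le_compat_r with (r := 8 * INR n * eps) in H; [|lra].
        replace (L * B ^ 2 / (8 * INR n * eps) * (8 * INR n * eps)) with (L * B^2) in H by (field; lra). lra. }
      assert (Hm2 : 0 < 8 * INR n * m^2) by (repeat apply Rmult_lt_0_compat; try lra; apply pow_lt; lra).
      apply Rmult_le_reg_r with (8 * INR n * m^2); auto.
      replace (L * B ^ 2 / (8 * INR n * m ^ 2) * (8 * INR n * m ^ 2)) with (L * B^2) by (field; lra).
      lra. }
    destruct (chain_case n L B eps A N Hn HL HB He HA Heps') as (f & G & Pp & xs & R1 & R2 & R3 & R4 & R5).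
    exists (2*N+2)%nat, f, G, Pp, xs. split.
    { replace (INR (2*N+2)) with (m + 1) by (rewrite Hm, plus_INR, mult_INR; simpl; ring). lra. }
    split; auto. split; auto. split; auto. split; auto.
    intros t Ht. apply R5. fold m.
    assert (INR n + S <= INR n * (10 / 3 * r)).
    { assert (INR n <= INR n * (r / 3)). { rewrite <- (Rmult_1_r (INR n)) at 1. apply Rmult_le_compat_l; lra. }
      lra. }
    assert (INR n * r <= 3 * (INR n * m)) by (assert (INR n * (r/3) <= INR n * m) by (apply Rmult_le_compat_l; lra); lra).
    assert (0 <= INR n * r) by (apply Rmult_le_pos; lra). lra.
  -
    destruct (small_case n L B eps A Hn HL HB He HA Heps) as (f & G & Pp & xs & R1 & R2 & R3 & R4 & R5).
    exists 2%nat, f, G, Pp, xs. split.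
    { simpl. lra. }
    split; auto. split; auto. split; auto. split; auto.
    intros t Ht. apply R5.
    assert (S <= 9 * INR n) by (assert (3 * INR n * r <= 3 * INR n * 3) by (apply Rmult_le_compat_l; lra); lra).
    lra. Qed.
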